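(* Let $q$ be a prime power and $\eta\ge2$, $(\delta_T,\delta_X)\in\mathbb{Z}\times\mathbb{N}$ with $\delta_T<0$, $\eta\mid\delta_T$ and $q\le\delta/\eta$, where $\delta=\delta_T+\eta\delta_X$. Write $\delta/\eta=k(q-1)+r$ with $k\in\mathbb{N}$ and $r\in\{1,\dots,q-1\}$. Then the polynomial \[F_0=X_1^{-\delta_T/\eta}X_2^{\delta/\eta}-T_1^{\eta k(q-1)}X_1^{k(q-1)-\delta_T/\eta}X_2^{r}+T_1^{(\eta k-1)(q-1)}T_2^{q-1}X_1^{k(q-1)-\delta_T/\eta}X_2^{r}-T_2^{\eta k(q-1)}X_1^{k(q-1)-\delta_T/\eta}X_2^{r}\] lies in the kernel of $\mathrm{ev}_{(\delta_T,\delta_X)}$, i.e. it vanishes at every $\mathbb{F}_q$-rational point of $\mathcal{H}_\eta$.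
   Context: $R=\mathbb{F}_q[T_1,T_2,X_1,X_2]$; the bidegree of $T_1^{c_1}T_2^{c_2}X_1^{d_1}X_2^{d_2}$ is $(c_1+c_2-\eta d_1,d_1+d_2)$ ($F_0$ has bidegree $(\delta_T,\delta_X)$). The Hirzebruch surface $\mathcal{H}_\eta$ is the quotient of $(\mathbb{A}^2\setminus\{0\})^2$ by $\mathbb{G}_m^2$ acting by $(\lambda,\mu)\cdot(t_1,t_2,x_1,x_2)=(\lambda t_1,\lambda t_2,\mu\lambda^{-\eta}x_1,\mu x_2)$; each of its $\mathbb{F}_q$-points has a unique representative of the form $(1,a,1,b)$, $(0,1,1,b)$, $(1,a,0,1)$ or $(0,1,0,1)$ ($a,b\in\mathbb{F}_q$), where polynomials are evaluated; $\mathrm{ev}_{(\delta_T,\delta_X)}$ maps a bidegree-$(\delta_T,\delta_X)$ polynomial to its vector of values at these points. *)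

(* Defs.v *)
From mathcomp Require Import all_boot all_order all_algebra all_field.
From mathcomp Require Import mpoly.
Set Implicit Arguments. Unset Strict Implicit. Unset Printing Implicit Defensive.
Import Order.TTheory GRing.Theory Num.Theory.
Local Open Scope ring_scope.

Definition iT1 : 'I_4 := @Ordinal 4 0 isT.
Definition iT2 : 'I_4 := @Ordinal 4 1 isT.
Definition iX1 : 'I_4 := @Ordinal 4 2 isT.
Definition iX2 : 'I_4 := @Ordinal 4 3 isT.

Definition pt4 (F : nzRingType) (t1 t2 x1 x2 : F) : 'I_4 -> F :=
  fun i => nth 0 [:: t1; t2; x1; x2] i.

(* The integer exponents -dT/eta and d/eta are
   nonnegative under the hypotheses of the lemma; they are converted to nat
   via absz. *)
Definition F0 (F : nzRingType) (q eta : nat) (dT : int) (dX k r : nat)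
  : {mpoly F[4]} :=
  let e := `|((- dT) %/ eta%:Z)%Z|%N in
  let dd := `|((dT + (eta * dX)%N%:Z) %/ eta%:Z)%Z|%N in
  let M := 'X_iX1 ^+ (k * (q - 1) + e) * 'X_iX2 ^+ r in
  'X_iX1 ^+ e * 'X_iX2 ^+ dd
  - 'X_iT1 ^+ (eta * k * (q - 1)) * M
  + 'X_iT1 ^+ ((eta * k - 1) * (q - 1)) * 'X_iT2 ^+ (q - 1) * M
  - 'X_iT2 ^+ (eta * k * (q - 1)) * M.

(* p lies in the kernel of ev: p vanishes at the chosen representatives
   (1,a,1,b), (0,1,1,b), (1,a,0,1), (0,1,0,1) of all F_q-points of H_eta. *)
Definition in_ker_ev (F : nzRingType) (p : {mpoly F[4]}) : Prop :=
  forall a b : F,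
    [/\ p.@[pt4 1 a 1 b] = 0, p.@[pt4 0 1 1 b] = 0,
        p.@[pt4 1 a 0 1] = 0 & p.@[pt4 0 1 0 1] = 0].

(* Main.v *)
Require Import Defs.
From mathcomp Require Import all_boot all_order all_algebra all_field.
From mathcomp Require Import mpoly.
From mathcomp Require Import zify.
Import Order.TTheory GRing.Theory Num.Theory.
Local Open Scope ring_scope.

Lemma pow_red (F : finFieldType) (x : F) (m r : nat) :
  (1 <= r)%N -> x ^+ (m * (#|F| - 1) + r) = x ^+ r.
Proof.
move=> r1; elim: m => [|m IH]; first by rewrite mul0n add0n.
have hq : (1 <= #|F|)%N by apply/card_gt0P; exists 0.
rewrite mulSn -addnA; move: IH; set t := (m * (#|F| - 1) + r)%N => IH.
have ht : (1 <= t)%N by rewrite /t (leq_trans r1) // leq_addl.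
have -> : (#|F| - 1 + t = t.-1 + #|F|)%N by lia.
by rewrite exprD expf_card -exprSr prednK.
Qed.

Lemma pow_unit (F : finFieldType) (a : F) : a != 0 -> a ^+ (#|F| - 1) = 1.
Proof.
move=> a0.
have hq : (1 <= #|F|)%N by apply/card_gt0P; exists 0.
apply: (mulfI a0); rewrite mulr1 -exprS.
have -> : (#|F| - 1).+1 = #|F| by lia.
by rewrite expf_card.
Qed.

Lemma mevalXn' (R : comNzRingType) n (v : 'I_n -> R) (p : {mpoly R[n]}) e :
  (p ^+ e).@[v] = p.@[v] ^+ e.
Proof. by elim: e => [|e IH]; rewrite ?expr0 ?meval1 // !exprS mevalM IH. Qed.

Theorem lemma2p15 (F : finFieldType) (q eta : nat) (dT : int) (dX k r : nat) :
  #|F| = q ->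
  (2 <= eta)%N ->
  dT < 0 ->
  (eta%:Z %| dT)%Z ->
  q%:Z <= ((dT + (eta * dX)%N%:Z) %/ eta%:Z)%Z ->
  ((dT + (eta * dX)%N%:Z) %/ eta%:Z)%Z = (k * (q - 1) + r)%N%:Z ->
  (1 <= r <= q - 1)%N ->
  in_ker_ev (@F0 F q eta dT dX k r).
Proof.
move=> hF heta hdT /dvdzP [m hm] hq hD /andP [r1 rq].
subst q.
have eta0 : eta%:Z != 0 by apply/eqP; lia.
have he : ((- dT) %/ eta%:Z)%Z = - m by rewrite hm -mulNr mulzK.
have e1 : (1 <= `|((- dT) %/ eta%:Z)%Z|)%N.
  rewrite he; move: hdT; rewrite hm; nia.
rewrite hD in hq.
have k1 : (1 <= k)%N.
  case: k hq {hD} => // ; rewrite mul0n add0n; lia.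
rewrite /in_ker_ev /F0 hD.
move: e1; set e := `|_|%N => e1.
move=> a b.
rewrite !(mevalB, mevalD, mevalM, mevalXn', mevalXU) /pt4 /=.
have z : forall n, (0 < n)%N -> (0:F) ^+ n = 0.
  by case=> // n _; rewrite exprS mul0r.
have q1 : (0 < #|F| - 1)%N by lia.
have p1 : (0 < eta * k * (#|F| - 1))%N by rewrite !muln_gt0 q1 k1 !andbT; lia.
have p2 : (0 < (eta * k - 1) * (#|F| - 1))%N.
  rewrite muln_gt0 q1 andbT; have : (2 <= eta * k)%N by nia. lia.
have p3 : (0 < k * (#|F| - 1) + e)%N by lia.
rewrite !expr1n !pow_red // ?(z _ p1) ?(z _ p2) ?(z _ p3) ?(z _ e1) !mul1r.
split; rewrite ?mul0r ?mulr0 ?subrr ?sub0r ?add0r ?oppr0 ?subr0 //.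
- have [->|a0] := eqVneq a 0; first by rewrite !z // !mul0r subrr.
  by rewrite [in X in _ - X]mulnC exprM pow_unit // expr1n subrr.
- by rewrite !addr0 subrr.
Qed.
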